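(* Let $U$ be an $\mathrm{OST}$-monoid, $V$ a supertropical monoid, and $\alpha:U\to V$ a surjective transmission such that for every $p\in V$ the fiber $\alpha^{-1}(p)$ is convex in $U$. Then $V$, equipped with the total ordering induced by $\alpha$, is an $\mathrm{OST}$-monoid.
   Context: A supertropical monoid is a commutative monoid $(U,\cdot)$ with absorbing element $0$ and distinguished idempotent $e$ with $ex=0\Rightarrow x=0$, together with a total ordering $\le_M$ on $M:=eU$, compatible with multiplication and with $0$ least, making $M$ a bipotent semiring. A transmission $\alpha:U\to V$ is a map with $\alpha(0)=0$, $\alpha(1)=1$, multiplicative, $\alpha(e_U)=e_V$, order-preserving on $eU$. An OST-monoid is a supertropical monoid $U$ with a total ordering $\le$ on $U$ such that: (OST1) $x\le y\Rightarrow xz\le yz$; (OST2) on $M$ the ordering $\le$ coincides with $\le_M$; (OST3) $0\le1\le e$. A subset $C$ of a totally ordered set $X$ is convex if $x,y\in C$, $z\in X$, $x\le z\le y$ imply $z\in C$. If $f:X\to Y$ is a surjection from a totally ordered set with convex fibers, the ordering induced by $f$ is the unique total ordering on $Y$ making $f$ order preserving. *)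

(* Defs.v *)
(** A supertropical monoid: commutative monoid (U, *, 1) with absorbing 0,
    distinguished idempotent e with (e x = 0 -> x = 0), and a total ordering
    leM on the ghost ideal M = eU = {x | e x = x}, compatible with
    multiplication and with 0 least (so M, with max as addition, is a
    bipotent semiring). *)
Record STMonoid := {
  st_car :> Type;
  st_mul : st_car -> st_car -> st_car;
  st_one : st_car;
  st_zero : st_car;
  st_e : st_car;
  st_leM : st_car -> st_car -> Prop;
  st_mulA : forall x y z, st_mul x (st_mul y z) = st_mul (st_mul x y) z;
  st_mulC : forall x y, st_mul x y = st_mul y x;
  st_mul1 : forall x, st_mul st_one x = x;
  st_mul0 : forall x, st_mul st_zero x = st_zero;
  st_ee : st_mul st_e st_e = st_e;
  st_e_faithful : forall x, st_mul st_e x = st_zero -> x = st_zero;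
  st_leM_refl : forall x, st_mul st_e x = x -> st_leM x x;
  st_leM_antisym : forall x y, st_mul st_e x = x -> st_mul st_e y = y ->
      st_leM x y -> st_leM y x -> x = y;
  st_leM_trans : forall x y z, st_mul st_e x = x -> st_mul st_e y = y ->
      st_mul st_e z = z -> st_leM x y -> st_leM y z -> st_leM x z;
  st_leM_total : forall x y, st_mul st_e x = x -> st_mul st_e y = y ->
      st_leM x y \/ st_leM y x;
  st_leM_mul : forall x y z, st_mul st_e x = x -> st_mul st_e y = y ->
      st_mul st_e z = z -> st_leM x y -> st_leM (st_mul x z) (st_mul y z);
  st_leM_0 : forall x, st_mul st_e x = x -> st_leM st_zero x
}.

Arguments st_mul {s} _ _.
Arguments st_one {s}.
Arguments st_zero {s}.
Arguments st_e {s}.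
Arguments st_leM {s} _ _.

Definition inM {U : STMonoid} (x : U) : Prop := st_mul st_e x = x.

Definition is_transmission {U V : STMonoid} (a : U -> V) : Prop :=
  a st_zero = st_zero /\ a st_one = st_one /\
  (forall x y, a (st_mul x y) = st_mul (a x) (a y)) /\
  a st_e = st_e /\
  (forall x y, inM x -> inM y -> st_leM x y -> st_leM (a x) (a y)).

Definition is_total_order {T : Type} (le : T -> T -> Prop) : Prop :=
  (forall x, le x x) /\
  (forall x y, le x y -> le y x -> x = y) /\
  (forall x y z, le x y -> le y z -> le x z) /\
  (forall x y, le x y \/ le y x).

Definition is_OST (U : STMonoid) (le : U -> U -> Prop) : Prop :=
  is_total_order le /\
  (forall x y z, le x y -> le (st_mul x z) (st_mul y z)) /\
  (forall x y, inM x -> inM y -> (le x y <-> st_leM x y)) /\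
  le st_zero st_one /\ le st_one st_e.

Definition convex {T : Type} (le : T -> T -> Prop) (C : T -> Prop) : Prop :=
  forall x y z, C x -> C y -> le x z -> le z y -> C z.

Definition order_preserving {X Y : Type} (leX : X -> X -> Prop)
  (leY : Y -> Y -> Prop) (f : X -> Y) : Prop :=
  forall x y, leX x y -> leY (f x) (f y).

(* Main.v *)
Require Import Defs.
From Stdlib Require Import Classical.

Section S.
Variables (U V : STMonoid) (leU : U -> U -> Prop) (alpha : U -> V).
Hypothesis Hto : is_total_order leU.
Hypothesis Hconv : forall p : V, convex leU (fun x => alpha x = p).

Lemma sepA x y x' : leU x y -> alpha x <> alpha y -> alpha x' = alpha x -> leU x' y.
Proof.
  destruct Hto as [R [A [T Tot]]]. intros Hxy Hne Hx'.
  destruct (Tot x' y) as [H|H]; auto.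
  exfalso. apply Hne. symmetry.
  apply (Hconv (alpha x) x x' y); auto.
Qed.

Lemma sepB x y y' : leU x y -> alpha x <> alpha y -> alpha y' = alpha y -> leU x y'.
Proof.
  destruct Hto as [R [A [T Tot]]]. intros Hxy Hne Hy'.
  destruct (Tot x y') as [H|H]; auto.
  exfalso. apply Hne.
  apply (Hconv (alpha y) y' y x); auto.
Qed.

Lemma sep x y x' y' : leU x y -> alpha x <> alpha y -> alpha x' = alpha x ->
  alpha y' = alpha y -> leU x' y'.
Proof.
  intros H1 H2 H3 H4.
  assert (leU x' y) by (eapply sepA; eauto).
  eapply sepB; eauto. congruence.
Qed.
End S.

Theorem theorem61p10 (U V : STMonoid) (leU : U -> U -> Prop)
  (alpha : U -> V) :
  is_OST U leU ->
  is_transmission alpha ->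
  (forall p : V, exists x : U, alpha x = p) ->
  (forall p : V, convex leU (fun x => alpha x = p)) ->
  (exists leV : V -> V -> Prop,
      is_total_order leV /\ order_preserving leU leV alpha) /\
  (forall leV : V -> V -> Prop,
      is_total_order leV -> order_preserving leU leV alpha ->
      is_OST V leV).
Proof.
  intros [Hto [O1 [O2 [O3a O3b]]]] [T0 [T1 [TM [Te TL]]]] Hsurj Hconv.
  pose proof Hto as Hto'.
  destruct Hto' as [R [A [Tr Tot]]].
  split.
  - exists (fun p q => exists x y, alpha x = p /\ alpha y = q /\ leU x y).
    split; [|intros x y H; exists x, y; repeat split; auto].
    split; [|split; [|split]].
    + intros p. destruct (Hsurj p) as [x Hx]. exists x, x; repeat split; auto.
    + intros p q [x [y [Hx [Hy Hxy]]]] [y' [x' [Hy' [Hx' Hyx]]]].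
      destruct (classic (p = q)) as [|Hne]; auto. exfalso.
      assert (leU x' y') by (eapply (sep U V leU alpha Hto Hconv x y); eauto; congruence).
      apply Hne. rewrite <- Hx', <- Hy'. f_equal. auto.
    + intros p q r [x [y [Hx [Hy Hxy]]]] [y' [z [Hy' [Hz Hyz]]]].
      destruct (classic (p = q)) as [Hpq|Hpq].
      { subst. exists y', z. repeat split; auto; congruence. }
      destruct (classic (q = r)) as [Hqr|Hqr].
      { subst. exists x, y. repeat split; auto; congruence. }
      assert (leU x y') by (eapply (sepB U V leU alpha Hto Hconv x y); eauto; congruence).
      exists x, z. repeat split; eauto.
    + intros p q. destruct (Hsurj p) as [x Hx]. destruct (Hsurj q) as [y Hy].
      destruct (Tot x y); [left; exists x, y | right; exists y, x]; repeat split; auto.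
  - intros leV Htv Hop.
    pose proof Htv as Htv'. destruct Htv' as [Rv [Av [Trv Totv]]].
    assert (Key : forall x y, leV (alpha x) (alpha y) -> alpha x = alpha y \/ leU x y).
    { intros x y H. destruct (Tot x y) as [H'|H']; auto.
      }
    assert (P1 : forall x y z, leV x y -> leV (st_mul x z) (st_mul y z)).
    { intros p q r H. destruct (Hsurj p) as [x Hx]. destruct (Hsurj q) as [y Hy].
      destruct (Hsurj r) as [z Hz]. subst.
      destruct (Key _ _ H) as [E|E].
      - rewrite E. apply Rv.
      - rewrite <- !TM. apply Hop. apply O1. auto. }
    split; [exact Htv|]. split; [exact P1|]. split.
    + assert (Fw : forall p q, inM p -> inM q -> leV p q -> st_leM p q).
      { intros p q Hp Hq H.
        destruct (classic (p = q)) as [E|Hne].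
        { subst. apply st_leM_refl. exact Hq. }
        destruct (Hsurj p) as [x Hx]. destruct (Hsurj q) as [y Hy]. subst.
        destruct (Key _ _ H) as [E|E]; [contradiction|].
        assert (Ex : alpha (st_mul st_e x) = alpha x) by (rewrite TM, Te; exact Hp).
        assert (Ey : alpha (st_mul st_e y) = alpha y) by (rewrite TM, Te; exact Hq).
        rewrite <- Ex, <- Ey. apply TL; try (unfold inM; rewrite st_mulA, st_ee; reflexivity).
        apply O2; try (unfold inM; rewrite st_mulA, st_ee; reflexivity).
        rewrite (st_mulC _ st_e x), (st_mulC _ st_e y). apply O1. exact E. }
      intros p q Hp Hq. split; [apply Fw; auto|].
      intros H. destruct (Totv p q) as [H'|H']; auto.
      assert (st_leM q p) by (apply Fw; auto).
      assert (p = q) by (apply st_leM_antisym; auto). subst. apply Rv.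
    + split.
      * rewrite <- T0, <- T1. apply Hop. exact O3a.
      * rewrite <- T1, <- Te. apply Hop. exact O3b.
Qed.
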